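(* Let $a$ be an element of a ring $K$ such that $l_0a^m+l_1a^{m-1}+\dots+l_{m-1}a=0$ for some positive integer $m$ and integers $l_0,\dots,l_{m-1}$ with $l_0>0$ and $\gcd(l_0,l_1,\dots,l_{m-1})=1$, and such that $d\,f(a)=0$ for some integer $d>1$ and some monic $f\in\mathbb{Z}[x]$ with $f(0)=0$. Then $\varphi(a)=0$ for some monic $\varphi\in\mathbb{Z}[x]$ with $\varphi(0)=0$ and $\deg\varphi\le m$.
   Context: Rings are associative and not necessarily unital. *)

(* Defs.v *)
From HB Require Import structures.
From mathcomp Require Import all_boot all_order all_algebra.
Set Implicit Arguments. Unset Strict Implicit. Unset Printing Implicit Defensive.
Import Order.TTheory GRing.Theory Num.Theory.
Local Open Scope ring_scope.

(* A (possibly non-unital) associative ring is given by an additive group K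
   (zmodType) together with a binary multiplication [mul] that is associative
   and distributes over + on both sides (axioms passed as hypotheses). *)

Definition apow (K : Type) (mul : K -> K -> K) (a : K) (i : nat) : K :=
  iter i.-1 (mul a) a.

(* Evaluation of an integer polynomial without constant term at a:
   p(a) = sum_{i >= 1} p_i a^i  (the constant coefficient is ignored; it is
   required to be 0 wherever peval0 is used). *)
Definition peval0 (K : zmodType) (mul : K -> K -> K) (p : {poly int}) (a : K) : K :=
  \sum_(1 <= i < size p) (apow mul a i *~ p`_i).

(* Main.v *)
Require Import Defs.
From HB Require Import structures.
From mathcomp Require Import all_boot all_order all_algebra.
From mathcomp Require Import ring zify.
Import Order.TTheory GRing.Theory Num.Theory.
Local Open Scope ring_scope.

Section Aux.
Variables (K : zmodType) (mul : K -> K -> K).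
Hypothesis mulDr : right_distributive mul +%R.
Variable a : K.

Definition ev (p : {poly int}) : K := peval0 mul ('X * p) a.

Lemma mula0 : mul a 0 = 0.
Proof.
have h := mulDr a 0 0; rewrite addr0 in h.
by apply: (addrI (mul a 0)); rewrite -h addr0.
Qed.

Lemma mulaN x : mul a (- x) = - mul a x.
Proof. by apply: (addrI (mul a x)); rewrite -mulDr !subrr mula0. Qed.

Lemma mulaz x z : mul a (x *~ z) = mul a x *~ z.
Proof.
have hn : forall n, mul a (x *+ n) = mul a x *+ n.
  by elim=> [|n IH]; rewrite ?mulr0n ?mula0 // !mulrS mulDr IH.
case: z => n; first by rewrite -!pmulrn hn.
by rewrite NegzE !mulrNz mulaN -!pmulrn hn.
Qed.

Lemma mula_sum n (F : 'I_n -> K) :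
  mul a (\sum_(i < n) F i) = \sum_(i < n) mul a (F i).
Proof. exact: (big_morph (mul a) (mulDr a) mula0). Qed.

Lemma peval0E (p : {poly int}) n : (size p <= n)%N ->
  peval0 mul p a = \sum_(1 <= i < n) apow mul a i *~ p`_i.
Proof.
move=> hn; rewrite /peval0.
case: (ltnP 0 (size p)) => [hp|hp].
  rewrite (big_cat_nat (n:=size p) (m:=1) (p:=n)) //=.
  rewrite [X in _ = _ + X]big_nat_cond [X in _ = _ + X]big1 ?addr0 // => i.
  by move=> /andP[/andP[hi _] _]; rewrite nth_default // mulr0z.
rewrite big_geq ?(leq_trans hp) //; apply/esym/big1 => i _.
by rewrite nth_default ?mulr0z // (leq_trans hp).
Qed.

Lemma evE (p : {poly int}) n : (size p <= n)%N ->
  ev p = \sum_(i < n) apow mul a i.+1 *~ p`_i.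
Proof.
move=> hn; rewrite /ev (peval0E ('X * p) n.+1); last first.
  apply: (leq_trans (size_polyMleq _ _)); by rewrite size_polyX.
rewrite big_add1 /= big_mkord; apply: eq_bigr => i _.
by rewrite coefXM.
Qed.

Lemma ev0 : ev 0 = 0.
Proof. by rewrite (evE _ 0) ?big_ord0 // size_poly0. Qed.

Lemma evD (p q : {poly int}) : ev (p + q) = ev p + ev q.
Proof.
set n := maxn (size p) (size q).
rewrite !(evE _ n) ?leq_maxl ?leq_maxr ?size_polyD // -big_split /=.
by apply: eq_bigr => i _; rewrite coefD mulrzDr.
Qed.

Lemma evZ c (p : {poly int}) : ev (c *: p) = ev p *~ c.
Proof.
rewrite !(evE _ (size p)) ?size_scale_leq // mulrz_suml.
by apply: eq_bigr => i _; rewrite coefZ mulrC mulrzA.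
Qed.

Lemma evN (p : {poly int}) : ev (- p) = - ev p.
Proof. by rewrite -scaleN1r evZ mulrN1z. Qed.

Lemma evB (p q : {poly int}) : ev (p - q) = ev p - ev q.
Proof. by rewrite evD evN. Qed.

Lemma evXM (p : {poly int}) : ev ('X * p) = mul a (ev p).
Proof.
rewrite (evE _ (size p).+1); last first.
  apply: (leq_trans (size_polyMleq _ _)); by rewrite size_polyX.
rewrite (evE _ (size p)) // big_ord_recl coefXM /= mulr0z add0r mula_sum.
by apply: eq_bigr => i _; rewrite /bump leq0n add1n coefXM /= mulaz.
Qed.

Lemma ev_ideal (q p : {poly int}) : ev p = 0 -> ev (q * p) = 0.
Proof.
elim/poly_ind: q p => [|q c IH] p hp; first by rewrite mul0r ev0.
rewrite mulrDl -mulrA evD IH; last by rewrite evXM hp mula0.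
by rewrite mul_polyC evZ hp mul0rz addr0.
Qed.

Lemma evXn j : ev 'X^j = apow mul a j.+1.
Proof.
rewrite (evE _ j.+1) ?size_polyXn // big_ord_recr /= coefXn eqxx.
rewrite big1 ?add0r // => i _; rewrite coefXn.
by rewrite (ltn_eqF (ltn_ord i)) mulr0z.
Qed.


Variable m : nat.

Definition inB (y : K) := exists r : {poly int}, (size r <= m.-1)%N /\ y = ev r.

Lemma inB0 : inB 0.
Proof. by exists 0; rewrite size_poly0 ev0. Qed.

Lemma inBD x y : inB x -> inB y -> inB (x + y).
Proof.
move=> [r [hr ->]] [s [hs ->]]; exists (r + s); rewrite evD; split=> //.
by apply: (leq_trans (size_polyD _ _)); rewrite geq_max hr hs.
Qed.

Lemma inBZ z x : inB x -> inB (x *~ z).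
Proof.
move=> [r [hr ->]]; exists (z *: r); rewrite evZ; split=> //.
exact: (leq_trans (size_scale_leq _ _)).
Qed.

Lemma inBN x : inB x -> inB (- x).
Proof. by move=> h; rewrite -mulrN1z; apply: inBZ. Qed.

Lemma inB_low (p : {poly int}) : (size p <= m.-1)%N -> inB (ev p).
Proof. by move=> h; exists p. Qed.

Lemma inB_poly (M : int) (p : {poly int}) n : (size p <= n)%N ->
  (forall i, (i < n)%N -> inB (ev (M *: 'X^i))) -> inB (ev (M *: p)).
Proof.
move=> hn hi; rewrite evZ (evE _ n) // mulrz_suml.
apply: big_ind => [|x y|i _]; [exact: inB0|exact: inBD|].
have := inBZ (p`_i) _ (hi i (ltn_ord i)); rewrite evZ evXn.
by rewrite -!mulrzA mulrC.
Qed.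


Lemma monic_low (g : {poly int}) : g \is monic ->
  (size (g - 'X^((size g).-1))%R <= (size g).-1)%N.
Proof.
move=> gm; apply/leq_sizeP => i hi; rewrite coefB coefXn.
case: (ltngtP i (size g).-1) => [|h|->].
- by rewrite ltnNge hi.
- rewrite nth_default ?subrr //.
  by move: h; case: (size g) => //= n; lia.
- by rewrite -lead_coefE (monicP gm) subrr.
Qed.

Variables (L1 : {poly int}) (c : int).
Hypothesis hL1 : ev L1 = 0.
Hypothesis sL1 : (size L1 <= m)%N.
Hypothesis cL1 : L1`_m.-1 = c.
Hypothesis m_gt0 : (0 < m)%N.
Variables (g : {poly int}) (N : int).
Hypothesis g_monic : g \is monic.
Hypothesis sg : (size g <= m)%N.
Hypothesis Ng : ev (N *: g) = 0.

Lemma boundN j : inB (ev (N *: 'X^j)).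
Proof.
elim/ltn_ind: j => j IH.
case: (ltnP j m.-1) => hj.
  by apply: inB_low; apply: (leq_trans (size_scale_leq _ _)); rewrite size_polyXn.
set s := (size g).-1; set r := g - 'X^s.
have hs : (s <= j)%N by rewrite /s; lia.
have hr : (size r <= s)%N by exact: monic_low.
have ej : N *: 'X^j = 'X^(j - s) * (N *: g) - N *: ('X^(j - s) * r).
  by rewrite /r -{1}(subnK hs) exprD -!mul_polyC; ring.
rewrite ej evB (ev_ideal _ _ Ng) sub0r; apply: inBN; apply: (inB_poly _ _ j).
  apply: (leq_trans (size_polyMleq _ _)); rewrite size_polyXn addSn /=.
  by rewrite -[X in (_ <= X)%N](subnK hs) leq_add2l.
by move=> i hi; apply: IH.
Qed.

Hypothesis N_neq0 : N != 0.

Lemma local (q : nat) : prime q -> (q %| `|c|)%N ->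
  (exists i, (i < m)%N && ~~ (q%:Z %| L1`_i)%Z) ->
  exists s : int, ~~ (q%:Z %| s)%Z /\ inB (ev (s *: 'X^(m.-1))).
Proof.
move=> qp qc exP.
have N0 : (0 < `|N|)%N by rewrite absz_gt0.
have [N' cqN' eN] := pfactor_coprime qp N0.
set k := logn q `|N| in eN.
pose Q t := forall j, inB (ev ((q ^ t * N')%N%:Z *: 'X^j)).
have Qk : Q k.
  move=> j; rewrite mulnC -eN; have := boundN j.
  case: (lerP 0 N) => hN; first by rewrite gez0_abs.
  by rewrite ltz0_abs // !evZ mulrNz; apply: inBN.
have ubP : forall i, (i < m)%N && ~~ (q%:Z %| L1`_i)%Z -> (i <= m)%N.
  by move=> i /andP[/ltnW].
case: (ex_maxnP exP ubP) => e /andP[em he] emax.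
have qcz : (q%:Z %| c)%Z by rewrite dvdzE.
have em1 : (e < m.-1)%N.
  rewrite ltn_neqAle -ltnS prednK // em andbT; apply/eqP => ee.
  by move: he; rewrite ee cL1 qcz.
have hg : gcdz (L1`_e) q = 1.
  have cop : coprime q `|L1`_e| by rewrite prime_coprime // -dvdzE.
  by rewrite /gcdz /= gcdnC (eqP cop).
have [u [v huv]] := Bezoutz (L1`_e) q; rewrite hg in huv.
set h := u *: L1.
have hh0 : ev h = 0 by rewrite evZ hL1 mul0rz.
set Plow := \poly_(i < e) h`_i.
set Phigh := \poly_(i < m) (if i == e then - v else if (e < i)%N then (h`_i %/ q%:Z)%Z else 0).
have hh : h = 'X^e + Plow + q%:Z *: Phigh.
  apply/polyP => i; rewrite !coefD coefXn !coefZ !coef_poly /h coefZ.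
  case: (ltngtP i e) => [ie|ei|->].
  - by rewrite /= if_same mulr0 addr0 add0r.
  - rewrite mulr0n !add0r.
    case: (ltnP i m) => im.
      have : (q%:Z %| L1`_i)%Z.
        apply: contraT => nd; have := emax i; rewrite im nd /= => /(_ isT).
        by rewrite leqNgt ei.
      by move=> /(dvdz_mull u) /divzK; rewrite mulrC => ->.
    by rewrite nth_default ?mulr0 // (leq_trans sL1 im).
  - by rewrite em addr0 mulr1n -huv mulrN (mulrC q%:Z) addrK.
have step : forall t, Q t.+1 -> Q t.
  move=> t Qt1; elim/ltn_ind => j IH.
  case: (ltnP j m.-1) => hj.
    by apply: inB_low; apply: (leq_trans (size_scale_leq _ _)); rewrite size_polyXn.
  have hej : (e <= j)%N by apply: (leq_trans (ltnW em1)).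
  have ej : (q ^ t * N')%N%:Z *: 'X^j = (q ^ t * N')%N%:Z *: ('X^(j - e) * h)
      - (q ^ t * N')%N%:Z *: ('X^(j - e) * Plow)
      - (q ^ t.+1 * N')%N%:Z *: ('X^(j - e) * Phigh).
    rewrite hh expnS -mulnA PoszM -!mul_polyC polyCM -{1}(subnK hej) exprD.
    ring.
  rewrite ej !evB evZ (ev_ideal _ _ hh0) mul0rz sub0r.
  apply: inBD; apply: inBN.
    apply: (inB_poly _ _ j); last by move=> i hi; apply: IH.
    apply: (leq_trans (size_polyMleq _ _)); rewrite size_polyXn addSn /=.
    rewrite -[X in (_ <= X)%N](subnK hej) leq_add2l; exact: size_poly.
  by apply: (inB_poly _ _ _ (leqnn _)) => i _; apply: Qt1.
have Qi : forall i, (i <= k)%N -> Q (k - i)%N.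
  elim=> [_|i IHi hi]; first by rewrite subn0.
  by apply: step; rewrite subnSK //; apply: IHi; apply: ltnW.
have Q0 := Qi k (leqnn k) (m.-1); rewrite subnn expn0 mul1n in Q0.
exists N'; split; last exact: Q0.
by rewrite dvdzE /= -prime_coprime.
Qed.

Hypothesis c_gt0 : 0 < c.
Hypothesis prim : forall q, prime q -> exists i, (i < m)%N && ~~ (q%:Z %| L1`_i)%Z.

Lemma T_c : inB (ev (c *: 'X^(m.-1))).
Proof.
have e : L1 = c *: 'X^(m.-1) + \poly_(i < m.-1) L1`_i.
  apply/polyP => i; rewrite coefD coefZ coefXn coef_poly.
  case: (ltngtP i m.-1) => [h|h|->].
  - by rewrite mulr0n mulr0 add0r.
  - rewrite mulr0n mulr0 add0r nth_default //.
    by apply: (leq_trans sL1); move: h; case: (m) => //= n; lia.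
  - by rewrite cL1 mulr1n mulr1 addr0.
have := hL1; rewrite {1}e evD => /eqP; rewrite addr_eq0 => /eqP ->.
by apply: inBN; apply: inB_low; exact: size_poly.
Qed.

Lemma T1 : inB (ev 'X^(m.-1)).
Proof.
have key : forall n, (0 < n)%N -> (n %| `|c|)%N ->
    inB (ev (n%:Z *: 'X^(m.-1))) -> inB (ev 'X^(m.-1)).
  elim/ltn_ind => n IH n0 nc hT.
  case: (eqVneq n 1) => [e1|n1]; first by move: hT; rewrite e1 scale1r.
  have n_gt1 : (1 < n)%N by lia.
  have qp := pdiv_prime n_gt1; have qn := pdiv_dvd n.
  have [s [hs hTs]] := @local (pdiv n) qp (dvdn_trans qn nc) (prim _ qp).
  have [u [v huv]] := Bezoutz n%:Z s.
  have gn : (gcdn n `|s| %| n)%N by exact: dvdn_gcdl.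
  apply: (IH (gcdn n `|s|)).
  - rewrite ltn_neqAle (dvdn_leq n0 gn) andbT; apply/eqP => ee.
    move: hs; rewrite dvdzE /=; move: (dvdn_gcdr n `|s|); rewrite ee.
    by move=> /(dvdn_trans qn) ->.
  - by rewrite gcdn_gt0 n0.
  - exact: dvdn_trans gn nc.
  - have -> : (gcdn n `|s|)%:Z = gcdz n s by [].
    rewrite -huv evZ mulrzDr mulrC (mulrC v) !mulrzA.
    by apply: inBD; apply: inBZ; rewrite -evZ.
apply: (key `|c|%N); first by rewrite absz_gt0 gt_eqF.
  exact: dvdnn.
by rewrite gez0_abs ?ltW //; exact: T_c.
Qed.

End Aux.

Theorem lemma9 (K : zmodType) (mul : K -> K -> K)
  (mulA : associative mul)
  (mulDl : left_distributive mul +%R)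
  (mulDr : right_distributive mul +%R)
  (a : K) (m : nat) (l : nat -> int)
  (m_gt0 : (0 < m)%N)
  (l0_gt0 : 0 < l 0%N)
  (l_gcd : \big[gcdz/0]_(i < m) l i = 1)
  (l_rel : \sum_(i < m) (apow mul a (m - i) *~ l i) = 0)
  (d : int) (f : {poly int})
  (d_gt1 : 1 < d)
  (f_monic : f \is monic)
  (f0 : f`_0 = 0)
  (df : peval0 mul f a *~ d = 0) :
  exists phi : {poly int},
    [/\ phi \is monic, phi`_0 = 0, (size phi <= m.+1)%N & peval0 mul phi a = 0].
Proof.
pose L1 : {poly int} := \poly_(i < m) l (m.-1 - i)%N.
have sL1 : (size L1 <= m)%N by exact: size_poly.
have hL1 : ev K mul a L1 = 0.
  rewrite (evE _ _ _ _ m) // -[RHS]l_rel [RHS](reindex_inj rev_ord_inj) /=.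
  apply: eq_bigr => i _; rewrite coef_poly ltn_ord.
  have -> : (m - (m - i.+1) = i.+1)%N by have := ltn_ord i; lia.
  by have -> : (m.-1 - i = m - i.+1)%N by lia.
have cL1 : L1`_m.-1 = l 0%N.
  by rewrite coef_poly prednK // leqnn subnn.
have prim : forall q, prime q -> exists i, (i < m)%N && ~~ (q%:Z %| L1`_i)%Z.
  move=> q qp.
  case: (boolP [exists i : 'I_m, ~~ (q%:Z %| L1`_i)%Z]).
    by case/existsP => i hi; exists i; rewrite ltn_ord hi.
  move/existsPn => H; exfalso.
  have hl : forall i : 'I_m, (q%:Z %| l i)%Z.
    move=> i; have := H (Ordinal (n:=m) (m:=m.-1 - i)%N ltac:(lia)).
    rewrite negbK coef_poly /=.
    have -> : (m.-1 - i < m)%N by lia.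
    by have -> : (m.-1 - (m.-1 - i) = i)%N by have := ltn_ord i; lia.
  have : (q%:Z %| \big[gcdz/0]_(i < m) l i)%Z.
    apply: (big_ind (fun x => (q%:Z %| x)%Z)) => [|x y hx hy|i _]; last exact: hl.
      exact: dvdz0.
    by rewrite dvdz_gcd hx hy.
  rewrite l_gcd dvdzE /= dvdn1 => /eqP q1.
  by move: (prime_gt1 qp); rewrite q1.
pose f1 : {poly int} := \poly_(i < (size f).-1) f`_i.+1.
have hf : f = 'X * f1.
  apply/polyP => i; rewrite coefXM; case: i => [|i] //=.
  rewrite coef_poly; case: ltnP => // hi.
  by rewrite nth_default //; move: hi; case: (size f) => //= n; lia.
have f1_monic : f1 \is monic.
  by move: f_monic; rewrite hf !monicE mulrC lead_coefMX.
have hdf : ev K mul a (d *: f1) = 0 by rewrite evZ /ev -hf.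
pose pZ := map_poly (intr : int -> rat).
have L1n0 : L1 != 0.
  apply/eqP => h; move: l0_gt0; rewrite -cL1 h coef0; by rewrite ltxx.
have Lqn0 : pZ L1 != 0 by rewrite -size_poly_eq0 size_rat_int_poly size_poly_eq0.
set G0 := gcdp (pZ L1) (pZ f1).
have [p1 [al al0 eG0] [r hr]] := dvdpP_rat_int (dvdp_gcdr (pZ L1) (pZ f1)).
set lp := lead_coef p1.
have lp1 : lp * lp = 1.
  have h1 : lp * lead_coef r = 1 by rewrite /lp -lead_coefM -hr; exact/eqP.
  have : (`|lp| * `|lead_coef r| = 1)%N by rewrite -abszM h1.
  move/eqP; rewrite muln_eq1 => /andP[/eqP hl _].
  case: (lerP 0 lp) => h.
    by rewrite -(gez0_abs h) hl.
  by rewrite -mulrNN -(ltz0_abs h) hl.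
have lp0 : lp != 0 by apply/eqP => h; move: lp1; rewrite h mul0r.
pose g := lp *: p1.
have g_monic : g \is monic by rewrite monicE lead_coefZ lp1.
have sg : (size g <= m)%N.
  rewrite size_scale // -size_rat_int_poly -(size_scale _ al0) -eG0.
  apply: (leq_trans _ sL1); rewrite -size_rat_int_poly.
  exact: dvdp_leq Lqn0 (dvdp_gcdl _ _).
have [[u1 u2] /= hB] := Bezoutp (pZ L1) (pZ f1).
case/eqpP: hB => [[c1 c2] /= /andP[c10 c20] hc].
pose be := lp%:~R / al / c2 * c1.
have hg : pZ g = (be *: u1) * pZ L1 + (be *: u2) * pZ f1.
  have eG0' : gcdp (pZ L1) (pZ f1) = al *: pZ p1 by exact: eG0.
  rewrite -!scalerAl -scalerDr /be -scalerA hc eG0' !scalerA /g /pZ map_polyZ /=.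
  by congr (_ *: _); field; rewrite c20 al0.
have [P1 [a1 a10 e1]] := rat_poly_scale (be *: u1).
have [P2 [a2 a20 e2]] := rat_poly_scale (be *: u2).
have hint : (a1 * a2) *: g = a2 *: (P1 * L1) + a1 *: (P2 * f1).
  apply: (map_inj_poly (f := intr : int -> rat) intr_inj (rmorph0 _)).
  have hg' : map_poly (intr : int -> rat) g = (be *: u1) * pZ L1 + (be *: u2) * pZ f1 := hg.
  rewrite [LHS]map_polyZ hg' rmorphD /= !map_polyZ /= !rmorphM /= e1 e2.
  have a1q : (a1%:~R : rat) != 0 by rewrite intr_eq0.
  have a2q : (a2%:~R : rat) != 0 by rewrite intr_eq0.
  by rewrite -!scalerAl !scalerDr !scalerA; congr (_ *: _ + _ *: _); field.
pose N := a1 * a2 * d.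
have d0 : d != 0 by apply/eqP => h; move: d_gt1; rewrite h.
have N0 : N != 0 by rewrite /N !mulf_neq0.
have Ng : ev K mul a (N *: g) = 0.
  have h1 : ev K mul a (P1 * L1) = 0 by apply: ev_ideal.
  have h2 : ev K mul a (P2 * f1) *~ d = 0.
    by rewrite -evZ scalerAr; apply: ev_ideal.
  rewrite /N mulrC -scalerA evZ hint evD !evZ h1 mul0rz add0r.
  by rewrite -mulrzA (mulrC a1) mulrzA h2 mul0rz.
have [r0 [hr0 er0]] := T1 _ _ mulDr _ _ _ _ hL1 sL1 cL1 m_gt0 _ _ g_monic sg Ng N0 l0_gt0 prim.
exists ('X * ('X^(m.-1) - r0)).
have hsz : size ('X^(m.-1) - r0) = m.
  by rewrite size_polyDl size_polyXn ?prednK // size_polyN -(prednK m_gt0) ltnS.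
split.
- rewrite monicE mulrC lead_coefMX lead_coefDl ?lead_coefXn //.
  by rewrite size_polyN size_polyXn -(prednK m_gt0) ltnS in hr0 *.
- by rewrite coefXM.
- rewrite mulrC size_mulX ?hsz //.
  by rewrite -size_poly_eq0 hsz -lt0n.
- by rewrite -/(ev K mul a _) evB er0 subrr.
Qed.
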